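(* Suppose that for every $t\in\mathcal{T}$, $Y^*(t)$ is conditionally independent of $T$ given $\boldsymbol{X}$ (unconfoundedness), that $f_{T|X}(t|\boldsymbol{x})>0$ on $\mathcal{T}\times\mathcal{X}$, and that the minimizers below exist and are unique. Then for every $t\in\mathcal{T}$, $$g(t)=\arg\min_{a\in\mathbb{R}}\mathbb{E}\big[\pi(T,\boldsymbol{X})\,\mathcal{L}(Y-a)\,\big|\,T=t\big],\qquad \pi(t,\boldsymbol{x}):=\frac{f_T(t)}{f_{T|X}(t|\boldsymbol{x})}.$$
   Context: $T$ is a continuous treatment with support $\mathcal{T}\subset\mathbb{R}$ and density $f_T$; $\boldsymbol{X}\in\mathcal{X}\subset\mathbb{R}^{d_X}$ are covariates with density $f_X$; $f_{T|X}$ is the conditional density of $T$ given $\boldsymbol{X}$; $\{Y^*(t):t\in\mathcal{T}\}$ are potential outcomes and $Y=Y^*(T)$ is the observed outcome. $\mathcal{L}:\mathbb{R}\to[0,\infty)$ is a strictly convex loss with $\mathcal{L}(0)=0$. The general dose-response function is $g(t):=\arg\min_{a\in\mathbb{R}}\mathbb{E}[\mathcal{L}(Y^*(t)-a)]$. *)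

(* Defs.v *)
From HB Require Import structures.
From mathcomp Require Import all_boot all_order all_algebra.
From mathcomp Require Import all_classical all_reals all_analysis.
From mathcomp Require Import measurable_realfun.
Set Implicit Arguments. Unset Strict Implicit. Unset Printing Implicit Defensive.
Import Order.TTheory GRing.Theory Num.Theory.
Local Open Scope classical_set_scope.
Local Open Scope ring_scope.
Local Open Scope ereal_scope.

Definition strictly_convex (R : realType) (L : R -> R) : Prop :=
  forall (x y l : R), x != y -> (0 < l)%R -> (l < 1)%R ->
    (L (l * x + (1 - l) * y) < l * L x + (1 - l) * L y)%R.

Definition is_unique_argmin (R : realType) (F : R -> \bar R) (m : R) : Prop :=
  (forall a, F m <= F a) /\ (forall b, (forall a, F b <= F a) -> b = m).

(* The joint law of (X, T, Y^*(t)) is specified by the density fX of X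
   (w.r.t. the reference measure nu on the covariate space), the conditional
   density fTX s x = f_{T|X}(s|x) (w.r.t. Lebesgue measure), and the
   conditional law  K t s x  of Y^*(t) given (T = s, X = x).
   potential_expect ... t phi = E[ phi(T, X, Y^*(t)) ]. *)
Definition potential_expect (R : realType) (dX : measure_display)
  (XT : measurableType dX) (nu : {measure set XT -> \bar R})
  (Tset : set R) (Xset : set XT) (fX : XT -> R) (fTX : R -> XT -> R)
  (K : R -> R -> XT -> probability R R) (t : R) (phi : R -> XT -> R -> R)
  : \bar R :=
  \int[nu]_(x in Xset) ((fX x)%:E *
     \int[lebesgue_measure]_(s in Tset) ((fTX s x)%:E *
        \int[K t s x]_y (phi s x y)%:E)).

(* Conditional expectation of psi(T, X, Y), Y = Y^*(T) the observed outcome,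
   given T = t, computed with the conditional density of X given T = t,
   f_{X|T}(x|t) = f_{T|X}(t|x) fX(x) / fT(t), and the conditional law of Y
   given (T = t, X = x), which is the law of Y^*(t) given (T = t, X = x). *)
Definition cond_expect_T (R : realType) (dX : measure_display)
  (XT : measurableType dX) (nu : {measure set XT -> \bar R})
  (Xset : set XT) (fX : XT -> R) (fTX : R -> XT -> R) (fT : R -> R)
  (K : R -> R -> XT -> probability R R) (t : R) (psi : R -> XT -> R -> R)
  : \bar R :=
  \int[nu]_(x in Xset) ((fTX t x * fX x / fT t)%:E *
     \int[K t t x]_y (psi t x y)%:E).

Definition ipw (R : realType) (XT : Type) (fT : R -> R) (fTX : R -> XT -> R)
  (t : R) (x : XT) : R := (fT t / fTX t x)%R.

(* Main.v *)
Require Import Defs.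
From HB Require Import structures.
From mathcomp Require Import all_boot all_order all_algebra.
From mathcomp Require Import all_classical all_reals all_analysis.
From mathcomp Require Import measurable_realfun.
From mathcomp Require Import ring.
Import Order.TTheory GRing.Theory Num.Theory.
Local Open Scope classical_set_scope.
Local Open Scope ring_scope.
Local Open Scope ereal_scope.


Local Close Scope ereal_scope.
Lemma L_nondec (R : realType) (L : R -> R) : (L 0 = 0)%R -> (forall u, (0 <= L u)%R) ->
  strictly_convex L -> forall x y, (0 <= x)%R -> (x <= y)%R -> (L x <= L y)%R.
Proof.
move=> h0 hp hc x y x0 xy.
have [->|xy'] := eqVneq x y; first by [].
have [->|x0'] := eqVneq x 0%R; first by rewrite h0.
have y0 : (0 < y)%R by rewrite (lt_le_trans _ xy)// lt_neqAle eq_sym x0' x0.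
have xlty : (x < y)%R by rewrite lt_neqAle xy' xy.
have l0 : (0 < x / y)%R by rewrite divr_gt0// lt_neqAle eq_sym x0' x0.
have l1 : (x / y < 1)%R by rewrite ltr_pdivrMr// mul1r.
have := hc y 0%R (x / y) (lt0r_neq0 y0) l0 l1.
rewrite mulr0 addr0 h0 mulr0 addr0 mulrAC -mulrA divff ?mulr1 ?lt0r_neq0//.
move=> /ltW/le_trans; apply.
rewrite -[leRHS]mul1r; apply: ler_wpM2r; [exact: hp|exact: ltW].
Qed.

Lemma L_noninc (R : realType) (L : R -> R) : (L 0 = 0)%R -> (forall u, (0 <= L u)%R) ->
  strictly_convex L -> forall x y, (x <= 0)%R -> (y <= x)%R -> (L x <= L y)%R.
Proof.
move=> h0 hp hc x y x0 xy.
pose L' := fun u => L (- u).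
have h0' : (L' 0 = 0)%R by rewrite /L' oppr0.
have hc' : strictly_convex L'.
  move=> a b l ab l0 l1; rewrite /L' opprD -!mulrN; apply: hc => //.
  by rewrite eqr_opp.
have := @L_nondec R L' h0' (fun u => hp _) hc' (- x) (- y).
by rewrite /L' !opprK oppr_ge0 lerN2; apply.
Qed.

Lemma L_meas (R : realType) (L : R -> R) : (L 0 = 0)%R -> (forall u, (0 <= L u)%R) ->
  strictly_convex L -> measurable_fun setT L.
Proof.
move=> h0 hp hc.
have -> : L = (fun u => L (Num.max u 0) + L (Num.min u 0))%R.
  apply/funext => u; have [u0|u0] := leP u 0%R.
    by rewrite /= h0 add0r.
  by rewrite /= h0 addr0.
apply: measurable_funD.
  apply: nondecreasing_measurable => // a b ab.
  apply: L_nondec => //; first by rewrite le_max lexx orbT.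
  by rewrite ge_max !le_max ab lexx /= orbT.
apply: nonincreasing_measurable => // a b ab.
apply: L_noninc => //; first by rewrite ge_min lexx orbT.
by rewrite le_min !ge_min ab lexx /= orbT.
Qed.

Local Open Scope ereal_scope.
Theorem mainTheorem1 (R : realType) (dX : measure_display)
  (XT : measurableType dX) (nu : {measure set XT -> \bar R})
  (Tset : set R) (Xset : set XT)
  (fX : XT -> R) (fTX : R -> XT -> R) (fT : R -> R)
  (K : R -> R -> XT -> probability R R)
  (L : R -> R) (g : R -> R)
  (* the loss *)
  (hL0 : (L 0 = 0)%R) (hLpos : forall u, (0 <= L u)%R)
  (hLconv : strictly_convex L)
  (* supports and densities *)
  (mTset : measurable Tset) (mXset : measurable Xset)
  (fX_ge0 : forall x, (0 <= fX x)%R)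
  (fX_meas : measurable_fun setT fX)
  (fX_int1 : \int[nu]_(x in Xset) (fX x)%:E = 1)
  (fTX_ge0 : forall s x, (0 <= fTX s x)%R)
  (fTX_meas : measurable_fun setT (fun p : R * XT => fTX p.1 p.2))
  (fTX_int1 : forall x, Xset x ->
     \int[lebesgue_measure]_(s in Tset) (fTX s x)%:E = 1)
  (fT_marg : forall t, Tset t ->
     (fT t)%:E = \int[nu]_(x in Xset) (fTX t x * fX x)%:E)
  (* conditional laws of the potential outcomes are kernels *)
  (K_meas : forall (t : R) (A : set R), measurable A ->
     measurable_fun setT (fun p : R * XT => K t p.1 p.2 A))
  (* unconfoundedness: Y^*(t) is independent of T given X *)
  (hunconf : forall t s s' x (A : set R), Tset t -> Tset s -> Tset s' ->
     Xset x -> measurable A -> K t s x A = K t s' x A)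
  (* positivity *)
  (hpos : forall t x, Tset t -> Xset x -> (0 < fTX t x)%R)
  (* g(t) is the (existing, unique) minimiser of a |-> E[L(Y^*(t) - a)] *)
  (hg : forall t, Tset t ->
     is_unique_argmin
       (fun a : R => potential_expect nu Tset Xset fX fTX K t
                   (fun _ _ y => (L (y - a))%R)) (g t))
  (* the weighted conditional minimisers exist and are unique *)
  (hmin : forall t, Tset t -> exists m,
     is_unique_argmin
       (fun a : R => cond_expect_T nu Xset fX fTX fT K t
                   (fun s x y => ipw fT fTX s x * L (y - a))%R) m) :
  forall t, Tset t ->
    is_unique_argmin
      (fun a : R => cond_expect_T nu Xset fX fTX fT K t
                  (fun s x y => ipw fT fTX s x * L (y - a))%R) (g t).
Proof.
move=> t Tt.
pose C := (fun a : R => cond_expect_T nu Xset fX fTX fT K t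
                  (fun s x y => ipw fT fTX s x * L (y - a))%R).
pose P := (fun a : R => potential_expect nu Tset Xset fX fTX K t
                   (fun _ _ y => (L (y - a))%R)).
change (is_unique_argmin C (g t)).
have hgt : is_unique_argmin P (g t) by exact: hg.
have hmt : exists m, is_unique_argmin C m by exact: hmin.
have fTge0 : (0 <= fT t)%R.
  rewrite -lee_fin fT_marg//; apply: integral_ge0 => x _.
  by rewrite lee_fin mulr_ge0.
have fTgt0 : (0 < fT t)%R.
  rewrite lt_neqAle fTge0 andbT; apply/negP => /eqP fT0.
  have C0 a : C a = 0.
    rewrite /C /cond_expect_T -fT0 invr0.
    under eq_integral do rewrite mulr0 mul0e.
    by rewrite integral0.
  have [m [_ hm]] := hmt.
  have h b : b = m by apply: hm => a; rewrite !C0.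
  by have := h 1%R; rewrite -(h 0%R) => /eqP; rewrite oner_eq0.
have CP : C = P.
  apply/funext => a; rewrite /C /P /cond_expect_T /potential_expect.
  have mL : measurable_fun setT (fun y : R => (L (y - a))%:E).
    apply/measurable_EFinP; apply: measurableT_comp; first exact: L_meas.
    by apply: measurable_funB => //; exact: measurable_cst.
  apply: eq_integral => x /set_mem Xx.
  have fTX0 := hpos t x Tt Xx.
  under [X in _ * X = _]eq_integral do rewrite EFinM.
  rewrite ge0_integralZl_EFin//; last 2 first.
    by move=> y _; rewrite lee_fin.
    by rewrite divr_ge0// ltW.
  rewrite muleA -EFinM.
  have -> : (fTX t x * fX x / fT t * ipw fT fTX t x = fX x)%R.
    by rewrite /ipw; field; apply/andP; split; rewrite lt0r_neq0.
  congr (_ * _).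
  transitivity (\int[lebesgue_measure]_(s in Tset)
     ((fTX s x)%:E * \int[K t t x]_y (L (y - a))%:E)).
    rewrite ge0_integralZr//.
    - by rewrite fTX_int1// mul1e.
    - apply/measurable_EFinP.
      apply: (measurable_funS measurableT) => //.
      exact: (measurable_fun_pair1 x fTX_meas).
    - by move=> s _; rewrite lee_fin.
    - by apply: integral_ge0 => y _; rewrite lee_fin.
  apply: eq_integral => s /set_mem Ts; congr (_ * _).
  apply: eq_measure_integral => A mA _.
  exact: hunconf.
by rewrite CP.
Qed.
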